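(* Let $p_1,p_2,\dots$ be integers $\ge 2$ and let $H_k=\wr_{i=1}^{k}C_{p_i}$, realized as the group of automorphisms of the first $k$ levels of the spherically homogeneous rooted tree with branching numbers $p_1,p_2,\dots$ whose vertex permutation at every vertex of level $i-1$ is a power of the cyclic shift on $p_i$ letters. Let $f_{k,k+1}:H_k\to H_{k+1}$ be the injective homomorphism extending an automorphism by trivial vertex permutations at level $k$ (i.e. $g\mapsto g(e,\dots,e)$), and $f_{k,j}$ the compositions. Then the direct limit $\varinjlim H_k$ of this direct system has commutator width $1$.
   Context: The commutator width $cw(G)$ of a group $G$ is the least $n$ such that every element of $G'$ is a product of at most $n$ commutators. *)

(* Defs.v *)
From mathcomp Require Import all_boot.
Set Implicit Arguments. Unset Strict Implicit. Unset Printing Implicit Defensive.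

(* Branching numbers: level i (i >= 1) of the tree has branching p i, i.e. a
   vertex at depth d (a word of length d) has children indexed by 0..p d.+1 - 1.
   p 0 is unused. *)
Definition is_vertex (p : nat -> nat) (v : seq nat) : bool :=
  all (fun i => nth 0 v i < p i.+1) (iota 0 (size v)).

(* An automorphism whose vertex permutations are powers of the cyclic shift is
   given by its portrait a : vertex -> exponent of the shift (mod p). *)
Definition portrait (p : nat -> nat) (a : seq nat -> nat) : Prop :=
  forall v, if is_vertex p v then a v < p (size v).+1 else a v == 0.

Definition act (p : nat -> nat) (a : seq nat -> nat) (v : seq nat) : seq nat :=
  mkseq (fun i => (nth 0 v i + a (take i v)) %% p i.+1) (size v).

Definition act_inv (p : nat -> nat) (a : seq nat -> nat) (v : seq nat) : seq nat :=
  foldl (fun y i => rcons y ((nth 0 v i + (p i.+1 - a y)) %% p i.+1))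
        [::] (iota 0 (size v)).

(* Group operations on portraits: mul a b is the portrait of the composite
   "first b, then a"; one is the identity; inv a the inverse. *)
Definition one : seq nat -> nat := fun _ => 0.

Definition mul (p : nat -> nat) (a b : seq nat -> nat) : seq nat -> nat :=
  fun v => if is_vertex p v then (b v + a (act p b v)) %% p (size v).+1 else 0.

Definition inv (p : nat -> nat) (a : seq nat -> nat) : seq nat -> nat :=
  fun v => if is_vertex p v
           then (p (size v).+1 - a (act_inv p a v)) %% p (size v).+1 else 0.

(* H_k = iterated wreath product of C_{p_1},...,C_{p_k}: automorphisms of the
   first k levels, i.e. portraits whose labels vanish at depth >= k.
   f_{k,k+1} extends by trivial vertex permutations at level k, i.e. it is the
   inclusion H_k <= H_{k+1} in this model; hence the direct limit of the system
   (H_k, f_{k,j}) is the union of the H_k. *)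
Definition in_H (p : nat -> nat) (k : nat) (a : seq nat -> nat) : Prop :=
  portrait p a /\ forall v, k <= size v -> a v = 0.

Definition in_lim (p : nat -> nat) (a : seq nat -> nat) : Prop :=
  exists k, in_H p k a.

Definition comm (p : nat -> nat) (a b : seq nat -> nat) : seq nat -> nat :=
  mul p (mul p (inv p a) (inv p b)) (mul p a b).

Definition is_commutator (p : nat -> nat) (g : seq nat -> nat) : Prop :=
  exists a b, [/\ in_lim p a, in_lim p b & g = comm p a b].

Definition prod_list (p : nat -> nat) (l : seq (seq nat -> nat)) : seq nat -> nat :=
  foldr (mul p) one l.

Definition all_commutators (p : nat -> nat) (l : seq (seq nat -> nat)) : Prop :=
  forall i, i < size l -> is_commutator p (nth one l i).

Definition in_derived (p : nat -> nat) (g : seq nat -> nat) : Prop :=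
  exists l, all_commutators p l /\ g = prod_list p l.

Definition cw_le (p : nat -> nat) (n : nat) : Prop :=
  forall g, in_derived p g ->
    exists l, [/\ size l <= n, all_commutators p l & g = prod_list p l].

Definition commutator_width_is (p : nat -> nat) (n : nat) : Prop :=
  cw_le p n /\ forall m, m < n -> ~ cw_le p m.

(* Main.v *)
Require Import Defs.
From mathcomp Require Import all_boot.
From Stdlib Require Import FunctionalExtensionality Lia.
From mathcomp Require Import zify.
Set Implicit Arguments. Unset Strict Implicit. Unset Printing Implicit Defensive.

Local Notation mul := Defs.mul.
Local Notation inv := Defs.inv.
Local Notation one := Defs.one.
Local Notation comm := Defs.comm.

Definition shift (p : nat -> nat) := fun i => p i.+1.
Definition sec (a : seq nat -> nat) (x : nat) := fun w => a (x :: w).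

Lemma iota1 n : iota 1 n = map succn (iota 0 n).
Proof. by rewrite -(addn0 1) iotaDl. Qed.

Lemma is_vertex_cons p x w :
  is_vertex p (x :: w) = (x < p 1) && is_vertex (shift p) w.
Proof.
by rewrite /is_vertex /= iota1 all_map.
Qed.

Lemma act_cons p a x w :
  act p a (x :: w) = ((x + a [::]) %% p 1) :: act (shift p) (sec a x) w.
Proof.
by rewrite /act /mkseq /= iota1 -map_comp.
Qed.

Lemma act_nil p a : act p a [::] = [::].
Proof. by []. Qed.

Lemma act_inv_nil p a : act_inv p a [::] = [::].
Proof. by []. Qed.

Lemma act_inv_cons p a x w :
  act_inv p a (x :: w) =
  ((x + (p 1 - a [::])) %% p 1) ::
     act_inv (shift p) (sec a ((x + (p 1 - a [::])) %% p 1)) w.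
Proof.
rewrite /act_inv /=.
set c := (x + (p 1 - a [::])) %% p 1.
have H : forall n m z,
  foldl (fun y i => rcons y ((nth 0 (x :: w) i + (p i.+1 - a y)) %% p i.+1))
        (c :: z) (iota m.+1 n) =
  c :: foldl (fun y i => rcons y ((nth 0 w i + (shift p i.+1 - sec a c y)) %% shift p i.+1))
        z (iota m n).
  elim=> [//|n IH] m z /=; exact: IH.
exact: H.
Qed.

Lemma size_act p a v : size (act p a v) = size v.
Proof. by rewrite /act size_mkseq. Qed.

Lemma size_act_inv p a v : size (act_inv p a v) = size v.
Proof.
rewrite /act_inv.
have H : forall n m y, size (foldl (fun y i => rcons y ((nth 0 v i + (p i.+1 - a y)) %% p i.+1)) y (iota m n)) = size y + n.
  by elim=> [|n IH] m y /=; [rewrite addn0 | rewrite IH size_rcons addnS].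
by rewrite H.
Qed.

Lemma mul_nil p a b : mul p a b [::] = (b [::] + a [::]) %% p 1.
Proof. by []. Qed.

Lemma inv_nil p a : inv p a [::] = (p 1 - a [::]) %% p 1.
Proof. by []. Qed.

Lemma mul_cons p a b x w : x < p 1 ->
  mul p a b (x :: w) = mul (shift p) (sec a ((x + b [::]) %% p 1)) (sec b x) w.
Proof.
move=> hx; rewrite /mul is_vertex_cons hx /= act_cons //.
Qed.

Lemma inv_cons p a x w : x < p 1 ->
  inv p a (x :: w) = inv (shift p) (sec a ((x + (p 1 - a [::])) %% p 1)) w.
Proof.
move=> hx; rewrite /inv is_vertex_cons hx /= act_inv_cons //.
Qed.

Lemma sec_mul p a b x : x < p 1 ->
  sec (mul p a b) x = mul (shift p) (sec a ((x + b [::]) %% p 1)) (sec b x).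
Proof. move=> hx; apply: functional_extensionality => w; exact: mul_cons. Qed.

Lemma sec_inv p a x : x < p 1 ->
  sec (inv p a) x = inv (shift p) (sec a ((x + (p 1 - a [::])) %% p 1)).
Proof. move=> hx; apply: functional_extensionality => w; exact: inv_cons. Qed.
Lemma mul_out p a b x w : p 1 <= x -> mul p a b (x :: w) = 0.
Proof. by move=> hx; rewrite /mul is_vertex_cons ltnNge hx. Qed.

Lemma inv_out p a x w : p 1 <= x -> inv p a (x :: w) = 0.
Proof. by move=> hx; rewrite /inv is_vertex_cons ltnNge hx. Qed.

Lemma portrait_zero p a v : portrait p a -> ~~ is_vertex p v -> a v = 0.
Proof. by move=> Ha hv; have := Ha v; rewrite (negbTE hv) => /eqP. Qed.

Lemma portrait_lt p a v : portrait p a -> is_vertex p v -> a v < p (size v).+1.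
Proof. by move=> Ha hv; have := Ha v; rewrite hv. Qed.

Definition pos p := forall i, 0 < p i.+1.

Lemma pos_shift p : pos p -> pos (shift p).
Proof. by move=> hp i; apply: hp. Qed.

Lemma portrait_one p : pos p -> portrait p one.
Proof. by move=> hp v; case: ifP. Qed.

Lemma portrait_sec p a x : pos p -> portrait p a -> portrait (shift p) (sec a x).
Proof.
move=> hp Ha w; case: (ltnP x (p 1)) => hx.
  by have := Ha (x :: w); rewrite is_vertex_cons hx.
have := Ha (x :: w); rewrite is_vertex_cons ltnNge hx /= /sec => /eqP ->.
by case: ifP => // _; apply: hp.
Qed.

Lemma portrait_mul p a b : pos p -> portrait p (mul p a b).
Proof. by move=> hp v; rewrite /mul; case: (is_vertex p v) => //; apply: ltn_pmod. Qed.

Lemma portrait_inv p a : pos p -> portrait p (inv p a).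
Proof. by move=> hp v; rewrite /inv; case: (is_vertex p v) => //; apply: ltn_pmod. Qed.

Lemma mulA_pt v p a b c : mul p (mul p a b) c v = mul p a (mul p b c) v.
Proof.
elim: v p a b c => [|x w IH] p a b c.
  by rewrite !mul_nil modnDml modnDmr addnA.
case: (ltnP x (p 1)) => hx; last by rewrite !mul_out.
have hp1 : 0 < p 1 by apply: leq_ltn_trans hx.
rewrite !mul_cons // sec_mul ?ltn_pmod // sec_mul //.
by rewrite IH !mul_nil modnDml modnDmr addnA.
Qed.

Lemma mulA p a b c : mul p (mul p a b) c = mul p a (mul p b c).
Proof. apply: functional_extensionality => v; exact: mulA_pt. Qed.

Lemma mul1g_pt v p a : pos p -> portrait p a -> mul p one a v = a v.
Proof.
elim: v p a => [|x w IH] p a hp Ha.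
  by rewrite mul_nil addn0 modn_small // (portrait_lt Ha).
case: (ltnP x (p 1)) => hx; last by rewrite mul_out // (portrait_zero Ha) // is_vertex_cons ltnNge hx.
by rewrite mul_cons // IH //; [apply: pos_shift | apply: portrait_sec].
Qed.

Lemma mulg1_pt v p a : pos p -> portrait p a -> mul p a one v = a v.
Proof.
elim: v p a => [|x w IH] p a hp Ha.
  by rewrite mul_nil modn_small // (portrait_lt Ha).
case: (ltnP x (p 1)) => hx; last by rewrite mul_out // (portrait_zero Ha) // is_vertex_cons ltnNge hx.
by rewrite mul_cons // addn0 modn_small // IH //; [apply: pos_shift | apply: portrait_sec].
Qed.

Lemma mulVg_pt v p a : pos p -> portrait p a -> mul p (inv p a) a v = one v.
Proof.
elim: v p a => [|x w IH] p a hp Ha.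
  have ha := @portrait_lt p a [::] Ha (erefl true).
  rewrite mul_nil inv_nil.
  rewrite modnDmr.
  rewrite subnKC; last exact: ltnW.
  exact: modnn.
case: (ltnP x (p 1)) => hx; last by rewrite mul_out.
have ha := @portrait_lt p a [::] Ha (erefl true).
have hp1 : 0 < p 1 by apply: leq_ltn_trans hx.
rewrite mul_cons //.
rewrite sec_inv ?ltn_pmod //.
rewrite modnDml -addnA subnKC; last exact: ltnW.
rewrite modnDr modn_small //.
by apply: IH; [apply: pos_shift | apply: portrait_sec].
Qed.
Lemma mulgV_pt v p a : pos p -> portrait p a -> mul p a (inv p a) v = one v.
Proof.
elim: v p a => [|x w IH] p a hp Ha.
  have ha := @portrait_lt p a [::] Ha (erefl true).
  rewrite mul_nil inv_nil modnDml subnK; last exact: ltnW.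
  exact: modnn.
case: (ltnP x (p 1)) => hx; last by rewrite mul_out.
rewrite mul_cons // sec_inv // inv_nil modnDmr.
by apply: IH; [apply: pos_shift | apply: portrait_sec].
Qed.

Lemma mul1g p a : pos p -> portrait p a -> mul p one a = a.
Proof. move=> hp Ha; apply: functional_extensionality => v; exact: mul1g_pt. Qed.
Lemma mulg1 p a : pos p -> portrait p a -> mul p a one = a.
Proof. move=> hp Ha; apply: functional_extensionality => v; exact: mulg1_pt. Qed.
Lemma mulVg p a : pos p -> portrait p a -> mul p (inv p a) a = one.
Proof. move=> hp Ha; apply: functional_extensionality => v; exact: mulVg_pt. Qed.
Lemma mulgV p a : pos p -> portrait p a -> mul p a (inv p a) = one.
Proof. move=> hp Ha; apply: functional_extensionality => v; exact: mulgV_pt. Qed.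
Section Grp.
Variables (p : nat -> nat) (hp : pos p).

Lemma inv_uniq c d : portrait p c -> portrait p d -> mul p c d = one -> c = inv p d.
Proof.
move=> Hc Hd E.
rewrite -(mulg1 hp Hc) -(mulgV hp Hd) -mulA E mul1g //; exact: portrait_inv.
Qed.

Lemma invM a b : portrait p a -> portrait p b ->
  inv p (mul p a b) = mul p (inv p b) (inv p a).
Proof.
move=> Ha Hb; symmetry; apply: inv_uniq; try apply: portrait_mul => //.
by rewrite mulA -(mulA _ (inv p a)) mulVg // mul1g // mulVg.
Qed.

Lemma inv_one : inv p one = one.
Proof.
symmetry; apply: inv_uniq; try apply: portrait_one => //.
by rewrite mul1g //; apply: portrait_one.
Qed.

Lemma mulKg a b : portrait p a -> portrait p b -> mul p (inv p a) (mul p a b) = b.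
Proof. by move=> Ha Hb; rewrite -mulA mulVg // mul1g. Qed.

Lemma mulKVg a b : portrait p a -> portrait p b -> mul p a (mul p (inv p a) b) = b.
Proof. by move=> Ha Hb; rewrite -mulA mulgV // mul1g. Qed.

End Grp.

Fixpoint lsum (j : nat) (p : nat -> nat) (a : seq nat -> nat) : nat :=
  match j with
  | 0 => a [::]
  | j.+1 => \sum_(x < p 1) lsum j (shift p) (sec a x)
  end.

Lemma sum_rot n c (F : nat -> nat) : 0 < n ->
  \sum_(x < n) F ((x + c) %% n) = \sum_(x < n) F x.
Proof.
move=> hn.
pose h : 'I_n -> 'I_n := fun x => Ordinal (ltn_pmod (x + c) hn).
have hinj : injective h.
  move=> x y /(congr1 val) /= /eqP; rewrite eqn_modDr !modn_small // => /eqP E.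
  exact: val_inj.
by symmetry; rewrite (reindex_inj hinj).
Qed.

Lemma lsum_mul j p a b : pos p ->
  lsum j p (mul p a b) = lsum j p a + lsum j p b %[mod p j.+1].
Proof.
elim: j p a b => [|j IH] p a b hp.
  by rewrite /= mul_nil modn_mod addnC.
rewrite /=.
rewrite (eq_bigr (fun x : 'I_(p 1) => lsum j (shift p)
   (mul (shift p) (sec a ((x + b [::]) %% p 1)) (sec b x)))); last first.
  by move=> x _; rewrite sec_mul.
rewrite -modn_summ.
rewrite (eq_bigr (fun x : 'I_(p 1) => (lsum j (shift p) (sec a ((x + b [::]) %% p 1))
   + lsum j (shift p) (sec b x)) %% p j.+2)); last first.
  move=> x _; exact: (IH (shift p) _ _ (pos_shift hp)).
rewrite modn_summ big_split /=.
by rewrite (sum_rot _ (fun y => lsum j (shift p) (sec a y))) // hp.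
Qed.

Lemma lsum_one j p : lsum j p one = 0.
Proof.
elim: j p => [//|j IH] p /=.
by rewrite big1 // => x _; apply: IH.
Qed.

Lemma lsum_inv j p a : pos p -> portrait p a ->
  lsum j p (inv p a) + lsum j p a = 0 %[mod p j.+1].
Proof.
move=> hp Ha; rewrite -lsum_mul // mulVg // lsum_one //.
Qed.

Lemma lsum_comm j p a b : pos p -> portrait p a -> portrait p b ->
  lsum j p (comm p a b) = 0 %[mod p j.+1].
Proof.
move=> hp Ha Hb; rewrite /comm lsum_mul // -modnDm lsum_mul // lsum_mul //.
rewrite modnDm addnACA -modnDm -[in X in _ = X](add0n 0) -(modnDm 0 0).
congr ((_ + _) %% _); exact: lsum_inv.
Qed.
Lemma in_H_mul p k a b : pos p -> in_H p k a -> in_H p k b -> in_H p k (mul p a b).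
Proof.
move=> hp [Ha Za] [Hb Zb]; split; first exact: portrait_mul.
move=> v hv; rewrite /mul Zb // Za ?size_act // addn0 mod0n; by case: (is_vertex p v).
Qed.

Lemma in_H_inv p k a : pos p -> in_H p k a -> in_H p k (inv p a).
Proof.
move=> hp [Ha Za]; split; first exact: portrait_inv.
move=> v hv; rewrite /inv Za ?size_act_inv // subn0 modnn; by case: (is_vertex p v).
Qed.

Lemma in_H_one p k : pos p -> in_H p k one.
Proof. by move=> hp; split; [apply: portrait_one|]. Qed.

Lemma in_H_mono p k k' a : k <= k' -> in_H p k a -> in_H p k' a.
Proof. move=> hk [Ha Za]; split => // v hv; apply: Za; exact: leq_trans hv. Qed.

Lemma in_H_sec p k g x : pos p -> in_H p k.+1 g -> in_H (shift p) k (sec g x).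
Proof.
move=> hp [Hg Zg]; split; first exact: portrait_sec.
by move=> w hw; apply: Zg.
Qed.

Lemma portrait_prod p l : pos p -> portrait p (prod_list p l).
Proof. by case: l => [|f l] hp /=; [apply: portrait_one | apply: portrait_mul]. Qed.

Lemma in_H_prod_map p k (F : nat -> seq nat -> nat) s : pos p ->
  (forall x, in_H p k (F x)) -> in_H p k (prod_list p (map F s)).
Proof.
move=> hp HF; elim: s => [|x s IH] /=; first exact: in_H_one.
exact: in_H_mul.
Qed.

Lemma lsum_prod_map j p (F : nat -> seq nat -> nat) s : pos p ->
  lsum j p (prod_list p (map F s)) = \sum_(x <- s) lsum j p (F x) %[mod p j.+1].
Proof.
move=> hp; elim: s => [|x s IH] /=; first by rewrite big_nil lsum_one.
by rewrite lsum_mul // -modnDmr IH modnDmr big_cons.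
Qed.

Lemma prod_map_rcons p (F : nat -> seq nat -> nat) s x : pos p ->
  (forall y, portrait p (F y)) ->
  prod_list p (map F (s ++ [:: x])) = mul p (prod_list p (map F s)) (F x).
Proof.
move=> hp HF; elim: s => [|y s IH] /=.
  by rewrite mulg1 // mul1g.
by rewrite IH mulA.
Qed.

Definition glue (p : nat -> nat) (c : nat) (F : nat -> seq nat -> nat) : seq nat -> nat :=
  fun v => match v with [::] => c | x :: w => if x < p 1 then F x w else 0 end.

Lemma sec_glue p c F x : x < p 1 -> sec (glue p c F) x = F x.
Proof. by move=> hx; apply: functional_extensionality => w; rewrite /sec /= hx. Qed.

Lemma in_H_glue p k c F : pos p -> c < p 1 ->
  (forall x, x < p 1 -> in_H (shift p) k (F x)) -> in_H p k.+1 (glue p c F).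
Proof.
move=> hp hc HF; split.
  move=> v; case: v => [|x w]; first by [].
  rewrite /=.
  rewrite is_vertex_cons; case: (ltnP x (p 1)) => hx /=.
    by have [HFx _] := HF x hx; exact: (HFx w).
  by [].
move=> [|x w] //= hv; case: ifP => // hx.
by have [_ ZF] := HF x hx; apply: ZF.
Qed.

Lemma sec_comm01 p a b x : pos p -> 1 < p 1 -> a [::] = 0 -> b [::] = 1 -> x < p 1 ->
  sec (comm p a b) x =
  mul (shift p) (mul (shift p) (inv (shift p) (sec a x)) (inv (shift p) (sec b x)))
      (mul (shift p) (sec a ((x + 1) %% p 1)) (sec b x)).
Proof.
move=> hp hn ha hb hx.
have hp1 : 0 < p 1 by apply: ltnW.
have idx : ((x + 1) %% p 1 + (p 1 - 1)) %% p 1 = x.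
  by rewrite modnDml -addnA subnKC // modnDr modn_small.
rewrite /comm sec_mul // mul_nil ha hb addn0 (modn_small hn).
rewrite sec_mul ?ltn_pmod // inv_nil hb (modn_small (m:=p 1 - 1)); last first.
  by rewrite subn1 prednK.
rewrite idx !sec_inv // ?ltn_pmod // ha hb subn0 modnDr (modn_small hx) idx.
by rewrite sec_mul // hb.
Qed.
Definition pos2 p := forall i, 1 < p i.+1.

Lemma main k : forall p g, pos2 p -> in_H p k g ->
  (forall j, lsum j p g %% p j.+1 = 0) ->
  exists a b, [/\ in_H p k a, in_H p k b & g = comm p a b].
Proof.
elim: k => [|k IH] p g hp2 Hg Hl; have hp : pos p by move=> i; apply: ltnW.
  have -> : g = one.
    by apply: functional_extensionality => v; apply: Hg.2.
  exists one, one; split; try exact: in_H_one.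
  by rewrite /comm inv_one // !(mul1g hp (portrait_one hp)).
have hp' : pos (shift p) by apply: pos_shift.
have hp2' : pos2 (shift p) by move=> i; apply: hp2.
have hn : 1 < p 1 := hp2 0.
have hn0 : 0 < p 1 by apply: ltnW.
have g0 : g [::] = 0.
  have := Hl 0; rewrite /= modn_small //.
  exact: (@portrait_lt p g [::] Hg.1 (erefl true)).
have Hgx : forall x, in_H (shift p) k (sec g x) by move=> x; apply: in_H_sec.
have Pgx : forall x, portrait (shift p) (sec g x) by move=> x; exact: (Hgx x).1.
pose P := prod_list (shift p) [seq sec g x | x <- iota 0 (p 1)].
have HP : in_H (shift p) k P by apply: in_H_prod_map.
have LP : forall j, lsum j (shift p) P %% shift p j.+1 = 0.
  move=> j; rewrite lsum_prod_map //.
  have := Hl j.+1; rewrite /= -(big_mkord xpredT (fun x => lsum j (shift p) (sec g x))).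
  by rewrite /index_iota subn0.
have [xh [y [Hxh Hy EP]]] := IH (shift p) P hp2' HP LP.
pose Q x := prod_list (shift p) [seq sec g i | i <- iota 0 x].
pose A x := mul (shift p) xh (Q x).
pose a := glue p 0 A.
pose b := glue p 1 (fun x => if x == (p 1).-1 then y else one).
have Pxh := Hxh.1.
have Py := Hy.1.
have PQ : forall x, portrait (shift p) (Q x) by move=> x; apply: portrait_prod.
have QS : forall x, Q (x + 1) = mul (shift p) (Q x) (sec g x).
  by move=> x; rewrite /Q iotaD add0n prod_map_rcons.
exists a, b; split.
- apply: in_H_glue => // x _; apply: in_H_mul => //; apply: in_H_prod_map => //.
- apply: in_H_glue => // x _; case: ifP => _ //; exact: in_H_one.
apply: functional_extensionality => -[|x w].
  rewrite g0 /comm !mul_nil !inv_nil /= subn0 modnn addn0 (modn_small hn).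
  rewrite (modn_small (m:=p 1 - 1)); last by rewrite subn1 prednK.
  by rewrite addn0 (modn_small (m:=p 1 - 1)) ?subnKC ?modnn // subn1 prednK.
case: (ltnP x (p 1)) => hx; last first.
  rewrite /comm mul_out // (portrait_zero Hg.1) // is_vertex_cons.
  by rewrite ltnNge hx.
change (comm p a b (x :: w)) with (sec (comm p a b) x w).
change (g (x :: w)) with (sec g x w).
congr (_ w).
rewrite sec_comm01 // !sec_glue ?ltn_pmod //.
case: (eqVneq x (p 1).-1) => hxn.
- have E : (x + 1) %% p 1 = 0 by rewrite hxn addn1 prednK // modnn.
  rewrite E.
  have A0 : A 0 = xh by rewrite /A /Q /= mulg1.
  rewrite A0 /A invM //.
  have -> : mul (shift p) (mul (shift p) (mul (shift p) (inv (shift p) (Q x)) (inv (shift p) xh)) (inv (shift p) y)) (mul (shift p) xh y) = mul (shift p) (inv (shift p) (Q x)) (comm (shift p) xh y) by rewrite /comm !mulA.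
  rewrite -EP.
  have -> : P = mul (shift p) (Q x) (sec g x) by rewrite -QS hxn addn1 prednK.
  by rewrite mulKg.
- have hx1 : x + 1 < p 1.
    move/eqP: hxn => hxn; lia.
  rewrite (modn_small hx1) inv_one // !mulg1 //; try apply: portrait_inv => //; try apply: portrait_mul => //.
  rewrite /A QS.
  have -> : mul (shift p) xh (mul (shift p) (Q x) (sec g x)) = mul (shift p) (mul (shift p) xh (Q x)) (sec g x) by rewrite mulA.
  by rewrite mulKg //; apply: portrait_mul.
Qed.
Lemma derived_prop p l : pos p -> all_commutators p l ->
  (exists k, in_H p k (prod_list p l)) /\
  forall j, lsum j p (prod_list p l) %% p j.+1 = 0.
Proof.
move=> hp; elim: l => [|c l IH] Hl.
  split; first by exists 0; apply: in_H_one.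
  by move=> j; rewrite /= lsum_one mod0n.
have Hc : is_commutator p c by apply: (Hl 0).
have Hl' : all_commutators p l by move=> i hi; apply: (Hl i.+1).
have [[kl Hkl] Zl] := IH Hl'.
have [a [b [[ka Ha] [kb Hb] ->]]] := Hc.
split.
  exists (maxn ka (maxn kb kl)); rewrite /=.
  apply: in_H_mul => //; last by apply: in_H_mono Hkl; rewrite leq_max leq_maxr orbT.
  rewrite /comm; apply: in_H_mul => //; apply: in_H_mul => //; try apply: in_H_inv => //.
  - by apply: in_H_mono Ha; rewrite leq_maxl.
  - by apply: in_H_mono Hb; rewrite leq_max leq_maxl orbT.
  - by apply: in_H_mono Ha; rewrite leq_maxl.
  - by apply: in_H_mono Hb; rewrite leq_max leq_maxl orbT.
move=> j; rewrite /= lsum_mul // -modnDm lsum_comm //; try by case: Ha; try by case: Hb.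
all: try by case: Hb.
by rewrite Zl mod0n add0n mod0n.
Qed.

Theorem corollary3 (p : nat -> nat) (hp : forall i, 2 <= p i.+1) :
  commutator_width_is p 1.
Proof.
have hp0 : pos p by move=> i; apply: ltnW.
have hp2 : pos2 p by [].
split.
  move=> g [l [Hl ->]].
  have [[k Hk] Hz] := derived_prop hp0 Hl.
  have [a [b [Ha Hb E]]] := main hp2 Hk Hz.
  exists [:: prod_list p l]; split => //.
    move=> [|i] //= _; exists a, b; split => //; [exists k | exists k] => //.
  by rewrite /= mulg1 //; apply: portrait_prod.
move=> m; rewrite ltnS leqn0 => /eqP -> H0.
pose e := glue (shift p) 1 (fun _ => one).
pose B := glue p 0 (fun x => if x == 0 then e else one).
pose A := glue p 1 (fun _ => one).
have hp' : pos (shift p) by apply: pos_shift.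
have He : in_H (shift p) 1 e.
  apply: in_H_glue; [exact: hp' | exact: (hp 1) | ].
  move=> x _; apply: in_H_one; exact: pos_shift.
have HB : in_H p 2 B.
  apply: in_H_glue; [exact: hp0 | exact: (ltnW (hp 0)) | ].
  move=> x _; case: ifP => _ //; exact: in_H_one.
have HA : in_H p 1 A.
  apply: in_H_glue; [exact: hp0 | exact: (hp 0) | ].
  move=> x _; exact: in_H_one.
have [l [hl _ El]] := H0 (comm p B A) (ex_intro _ [:: comm p B A] (conj
   (fun i hi => match i return i < 1 -> is_commutator p (nth one [:: comm p B A] i) with
     | 0 => fun _ => ex_intro _ B (ex_intro _ A (And3 (ex_intro _ 2 HB) (ex_intro _ 1 HA) erefl))
     | _.+1 => fun h => False_ind _ (notF h) end hi)
   (esym (mulg1 hp0 (portrait_mul _ _ hp0))))).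
move: hl; rewrite leqn0 => /nilP El0; move: El; rewrite El0 /= => Ec.
have : sec (comm p B A) 0 [::] = 0 by rewrite /sec Ec.
have hn : 1 < p 1 := hp 0.
rewrite sec_comm01 // ?(ltnW hn) // !sec_glue ?ltn_pmod ?(ltnW hn) //=.
rewrite add0n (modn_small hn) /=.
rewrite inv_one // (mulg1 hp' (portrait_inv _ hp')) (mul1g hp' (portrait_one hp')).
rewrite (mulg1 hp' (portrait_inv _ hp')) inv_nil /e /= modn_small.
  by move/eqP; rewrite subn_eq0 leqNgt (hp 1).
by rewrite subn1 prednK // ltnW // (hp 1).
Qed.
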